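(* Let $k$ be a non-archimedean local field of residue characteristic $2$ and let $B(x)=\sum_{i=1}^n a_i x_i^2$ be an anisotropic diagonal quadratic form on $k^n$ with $0\le\operatorname{ord} a_i\le 1$ for all $i$. Let $z=q^{-\beta}$, $w=zq^{-1}$, $u=z^2q^{-n}$, and let $T\ge0$ be an integer. Then \[ X^B(\beta;\varpi^{2T}) = \sum_{0\le\ell<2T+e+1} z^\ell X^B_\ell(\varpi^{2T}) + \frac{z^{2T+e+1}}{1-w}\,X^B_{2T+e+1}(\varpi^{2T}), \] \[ X^B(\beta;0) = \sum_{0\le\ell<e} z^\ell X^B_\ell(0) + \frac{z^e}{1-u}\,X^B_e(0) + \frac{z^{e+1}}{1-u}\,X^B_{e+1}(0). \]
   Context: $k$ has ring of integers $\mathfrak o$, uniformizer $\varpi$, residue field of cardinality $q$, absolute value normalized by $|\varpi|=q^{-1}$, normalized valuation $\operatorname{ord}$, and $e=\operatorname{ord}(2)$ is the ramification index. On $\mathfrak o^n$ use the additive Haar measure of total mass $1$. For $\rho\in\mathfrak o$ and integer $\ell\ge0$ set $X_\ell^B(\rho)=\operatorname{meas}\{x\in\mathfrak o^n: B(x)-\rho\in 2\varpi^\ell\mathfrak o\}$ and $X^B(\beta;\rho)=\sum_{\ell\ge0} z^\ell X^B_\ell(\rho)$ with $z=q^{-\beta}$ (a power series in $z$, convergent for $\operatorname{Re}\beta>0$). *)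

(* Defs.v *)
From HB Require Import structures.
From mathcomp Require Import all_boot all_order all_algebra.
From mathcomp Require Import all_classical all_reals all_analysis.
From mathcomp Require Import complex.
Set Implicit Arguments. Unset Strict Implicit. Unset Printing Implicit Defensive.
Import Order.TTheory GRing.Theory Num.Theory.
Local Open Scope ring_scope.
Local Open Scope classical_set_scope.
Local Open Scope complex_scope.
Local Open Scope ring_scope.

(* Non-archimedean local fields, given by a normalized discrete        *)
(* valuation [ord] (its value at 0 is irrelevant), a uniformizer [pi]   *)
(* and the cardinality [q] of the residue field.                        *)

Section LocalField.
Variables (K : fieldType) (ord : K -> int) (pi : K).

Definition intO (x : K) : Prop := x = 0 \/ (0 <= ord x)%R.

Definition inIdeal (c y : K) : Prop := exists t, intO t /\ y = c * t.

Definition cauchyK (u : nat -> K) : Prop :=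
  forall m : nat, exists N : nat, forall i j : nat, (N <= i)%N -> (N <= j)%N ->
    inIdeal (pi ^+ m) (u i - u j).

Definition convergesK (u : nat -> K) (l : K) : Prop :=
  forall m : nat, exists N : nat, forall i : nat, (N <= i)%N ->
    inIdeal (pi ^+ m) (u i - l).

(* (K, ord) is a complete discretely valued field, ord normalized with   *)
(* uniformizer pi, with finite residue field o / pi o of cardinality q.  *)
Record is_local_field (q : nat) : Prop := {
  lf_mul : forall x y : K, x != 0 -> y != 0 -> ord (x * y) = ord x + ord y;
  lf_add : forall x y : K, x != 0 -> y != 0 -> x + y != 0 ->
             Num.min (ord x) (ord y) <= ord (x + y);
  lf_unif : pi != 0 /\ ord pi = 1;
  lf_residue : exists r : seq K,
      [/\ size r = q,
          (forall a, a \in r -> intO a),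
          (forall i j, (i < q)%N -> (j < q)%N ->
               inIdeal pi (nth 0 r i - nth 0 r j) -> i = j) &
          (forall x, intO x -> exists2 a, a \in r & inIdeal pi (x - a))];
  lf_complete : forall u : nat -> K, cauchyK u -> exists l, convergesK u l
}.
End LocalField.

(* k^n with the sigma-algebra generated by the balls c + pi^m o^n       *)
(* (= the Borel sigma-algebra of the valuation topology).                *)

Definition vecK (K : fieldType) (n : nat) := 'rV[K]_n.
HB.instance Definition _ (K : fieldType) n := Choice.on (vecK K n).
HB.instance Definition _ (K : fieldType) n := GRing.Zmodule.on (vecK K n).
HB.instance Definition _ (K : fieldType) n := isPointed.Build (vecK K n) 0.

Section Space.
Variables (K : fieldType) (ord : K -> int) (pi : K) (n : nat).

Definition ballK (c : vecK K n) (m : nat) : set (vecK K n) :=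
  [set x | forall i : 'I_n, inIdeal ord (pi ^+ m) (x ord0 i - c ord0 i)].

Definition intOn : set (vecK K n) := [set x | forall i : 'I_n, intO ord (x ord0 i)].

Definition balls : set (set (vecK K n)) :=
  [set A | exists (c : vecK K n) (m : nat), A = ballK c m].

Definition kspace := g_sigma_algebraType balls.

Definition translate (c : vecK K n) (A : set (vecK K n)) : set (vecK K n) :=
  [set x + c | x in A].

Definition is_haar_on_On (R : realType) (mu : {measure set kspace -> \bar R}) : Prop :=
  mu (intOn : set kspace) = 1%E /\
  forall (c : vecK K n) (A : set kspace),
    intOn c -> measurable A -> (A : set (vecK K n)) `<=` intOn ->
    mu (translate c A : set kspace) = mu A.

Definition diagQF (a : 'I_n -> K) (x : vecK K n) : K :=
  \sum_(i < n) a i * x ord0 i ^+ 2.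

Definition anisotropic (a : 'I_n -> K) : Prop :=
  forall x : vecK K n, diagQF a x = 0 -> x = 0.

Definition Xset (a : 'I_n -> K) (l : nat) (rho : K) : set (vecK K n) :=
  [set x | intOn x /\ inIdeal ord (2 * pi ^+ l) (diagQF a x - rho)].

Definition Xl (R : realType) (mu : {measure set kspace -> \bar R})
  (a : 'I_n -> K) (l : nat) (rho : K) : R :=
  fine (mu (Xset a l rho : set kspace)).
End Space.

Definition cvgC (R : realType) (u : nat -> R[i]) (L : R[i]) : Prop :=
  forall eps : R, 0 < eps -> exists N : nat, forall m : nat, (N <= m)%N ->
    `|u m - L| < eps%:C.

Definition series_sumC (R : realType) (X : nat -> R) (z L : R[i]) : Prop :=
  cvgC (fun N => \sum_(l < N) z ^+ l * (X l)%:C) L.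

(* Main.v *)
Require Import Defs.
From HB Require Import structures.
From mathcomp Require Import all_boot all_order all_algebra.
From mathcomp Require Import all_classical all_reals all_analysis.
From mathcomp Require Import complex.
From mathcomp Require Import zify ring lra.
Set Implicit Arguments. Unset Strict Implicit. Unset Printing Implicit Defensive.
Import Order.TTheory GRing.Theory Num.Theory.
Local Open Scope complex_scope.
Local Open Scope ring_scope.
Section Val.
Variables (K : fieldType) (ord : K -> int) (pi : K) (q : nat).
Hypothesis hK : is_local_field ord pi q.

Local Notation o := (intO ord).
Local Notation P m x := (inIdeal ord (pi ^+ m) x).

Lemma ordM x y : x != 0 -> y != 0 -> ord (x * y) = ord x + ord y.
Proof. move=> x0 y0; exact: (lf_mul hK x0 y0). Qed.

Lemma pi_neq0 : pi != 0. Proof. by case: (lf_unif hK). Qed.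
Lemma ord_pi : ord pi = 1. Proof. by case: (lf_unif hK). Qed.

Lemma ord1 : ord 1 = 0.
Proof.
have h : ord 1 = ord 1 + ord 1 by rewrite -ordM ?oner_neq0 ?mulr1.
move: h; lia.
Qed.

Lemma ordV x : x != 0 -> ord x^-1 = - ord x.
Proof.
move=> x0; have := ordM x0 (invr_neq0 x0); rewrite divff // ord1 => h.
move: h; lia.
Qed.

Lemma ordX x k : x != 0 -> ord (x ^+ k) = ord x *+ k.
Proof.
move=> x0; elim: k => [|k IH]; first by rewrite expr0 ord1.
by rewrite exprS ordM ?expf_neq0 // IH mulrS.
Qed.

Lemma ord_pi_exp k : ord (pi ^+ k) = k%:Z.
Proof. rewrite ordX ?pi_neq0 // ord_pi; exact: natz. Qed.

Lemma ordN x : x != 0 -> ord (- x) = ord x.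
Proof.
move=> x0.
have n1 : (-1 : K) != 0 by rewrite oppr_eq0 oner_eq0.
have h1 : ord (-1) = 0.
  have h : ord 1 = ord (-1) + ord (-1) by rewrite -ordM // mulrNN mulr1.
  rewrite ord1 in h; lia.
by rewrite -mulN1r ordM // h1 add0r.
Qed.

Lemma oE x : x != 0 -> o x <-> 0 <= ord x.
Proof.
move=> x0; split => [[e|//]|h]; last by right.
by rewrite e eqxx in x0.
Qed.

Lemma o0 : o 0. Proof. by left. Qed.
Lemma o1 : o 1. Proof. by right; rewrite ord1. Qed.
Lemma opi : o pi. Proof. by right; rewrite ord_pi. Qed.

Lemma oN x : o x -> o (- x).
Proof.
case: (eqVneq x 0) => [->|x0]; first by rewrite oppr0 => _; exact: o0.
by rewrite !oE ?oppr_eq0 // ordN.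
Qed.

Lemma oM x y : o x -> o y -> o (x * y).
Proof.
case: (eqVneq x 0) => [->|x0]; first by rewrite mul0r => _ _; exact: o0.
case: (eqVneq y 0) => [->|y0]; first by rewrite mulr0 => _ _; exact: o0.
rewrite !oE ?mulf_neq0 // ordM // => hx hy; exact: addr_ge0.
Qed.

Lemma oD x y : o x -> o y -> o (x + y).
Proof.
case: (eqVneq x 0) => [->|x0]; first by rewrite add0r.
case: (eqVneq y 0) => [->|y0]; first by rewrite addr0.
case: (eqVneq (x + y) 0) => [->|s0]; first by move=> _ _; exact: o0.
rewrite !oE // => hx hy.
apply: le_trans (lf_add hK x0 y0 s0).
by rewrite le_min hx hy.
Qed.

Lemma oB x y : o x -> o y -> o (x - y).
Proof. by move=> hx hy; apply: oD => //; exact: oN. Qed.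

Lemma oX x k : o x -> o (x ^+ k).
Proof. move=> hx; elim: k => [|k IH]; [exact: o1| rewrite exprS; exact: oM]. Qed.

Lemma onat k : o k%:R.
Proof. elim: k => [|k IH]; [exact: o0| rewrite mulrS; apply: oD => //; exact: o1]. Qed.

Lemma inIdealE c y : c != 0 -> inIdeal ord c y <-> o (y / c).
Proof.
move=> c0; split=> [[t [ot ->]]|h].
  by rewrite mulrAC divff // mul1r.
by exists (y / c); split => //; rewrite mulrC divfK.
Qed.

Lemma inIdeal_ord c y : c != 0 -> y != 0 -> inIdeal ord c y <-> ord c <= ord y.
Proof.
move=> c0 y0; rewrite inIdealE // oE ?mulf_neq0 ?invr_neq0 //.
by rewrite ordM ?invr_neq0 // ordV // subr_ge0.
Qed.

Lemma inIdeal_eqord c c' y : c != 0 -> c' != 0 -> ord c = ord c' ->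
  inIdeal ord c y <-> inIdeal ord c' y.
Proof.
move=> c0 c'0 e; case: (eqVneq y 0) => [->|y0].
  by split=> _; exists 0; (split; [exact: o0|rewrite mulr0]).
by rewrite !inIdeal_ord // e.
Qed.

Lemma pX_neq0 m : pi ^+ m != 0. Proof. exact: expf_neq0 pi_neq0. Qed.

Lemma P0 m : P m 0.
Proof. by exists 0; split; [exact: o0|rewrite mulr0]. Qed.

Lemma PE m x : x != 0 -> P m x <-> m%:Z <= ord x.
Proof. by move=> x0; rewrite inIdeal_ord ?pX_neq0 // ord_pi_exp. Qed.

Lemma PD m x y : P m x -> P m y -> P m (x + y).
Proof.
move=> [s [os ->]] [t [ot ->]]; exists (s + t); split; first exact: oD.
by rewrite mulrDr.
Qed.

Lemma PN m x : P m x -> P m (- x).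
Proof. by move=> [s [os ->]]; exists (- s); split; [exact: oN|rewrite mulrN]. Qed.

Lemma PB m x y : P m x -> P m y -> P m (x - y).
Proof. by move=> hx hy; apply: PD => //; exact: PN. Qed.

Lemma PMo m x t : P m x -> o t -> P m (x * t).
Proof. by move=> [s [os ->]] ot; exists (s * t); split; [exact: oM|rewrite mulrA]. Qed.

Lemma PoM m x t : P m x -> o t -> P m (t * x).
Proof. by rewrite mulrC; exact: PMo. Qed.

Lemma PMM m k x y : P m x -> P k y -> P (m + k) (x * y).
Proof.
move=> [s [os ->]] [t [ot ->]]; exists (s * t); split; first exact: oM.
by rewrite exprD mulrACA.
Qed.

Lemma Pmono k m x : (k <= m)%N -> P m x -> P k x.
Proof.
move=> km [s [os ->]]; exists (pi ^+ (m - k) * s); split.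
  by apply: oM => //; apply: oX; exact: opi.
by rewrite mulrA -exprD subnKC.
Qed.

Lemma P_o m x : P m x -> o x.
Proof. by move=> [s [os ->]]; apply: oM => //; apply: oX; exact: opi. Qed.

Lemma P0o x : P 0 x <-> o x.
Proof. split; first exact: P_o. by move=> h; exists x; rewrite expr0 mul1r. Qed.

Lemma Ppi m : P m (pi ^+ m).
Proof. by exists 1; split; [exact: o1|rewrite mulr1]. Qed.

Lemma PpiM m k x : P m x -> P (k + m) (pi ^+ k * x).
Proof. by move=> h; apply: PMM => //; exact: Ppi. Qed.

Lemma PpiM_inv m k x : P (k + m) (pi ^+ k * x) -> P m x.
Proof.
move=> [s [os e]]; exists s; split => //.
apply: (mulfI (pX_neq0 k)); by rewrite e exprD mulrA.
Qed.

Lemma P_zero x : (forall m, P m x) -> x = 0.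
Proof.
move=> h; case: (eqVneq x 0) => // x0; exfalso.
have := h (`|ord x|.+1)%N; rewrite PE // => hh.
move: hh; lia.
Qed.

Lemma not_P1_unit u : o u -> ~ P 1 u -> u != 0 /\ ord u = 0.
Proof.
move=> ou nu; have u0 : u != 0 by apply/negP => /eqP e; apply: nu; rewrite e; exact: P0.
split => //; move: ou; rewrite oE // => h.
have : ~ (1%:Z <= ord u) by move=> h1; apply: nu; rewrite PE.
move: h; lia.
Qed.

Lemma P1_1 : ~ P 1 1.
Proof. by rewrite PE ?oner_neq0 // ord1. Qed.

Lemma o_inv_unit u : u != 0 -> ord u = 0 -> o u^-1.
Proof. by move=> u0 hu; rewrite oE ?invr_neq0 // ordV // hu oppr0. Qed.

Lemma PM_unit m x u : u != 0 -> ord u = 0 -> P m (x * u) -> P m x.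
Proof.
move=> u0 hu h; have := PMo h (o_inv_unit u0 hu); by rewrite mulfK.
Qed.


Definition rs : seq K := sval (cid (lf_residue hK)).

Lemma rsP : [/\ size rs = q,
          (forall a, a \in rs -> o a),
          (forall i j, (i < q)%N -> (j < q)%N ->
               inIdeal ord pi (nth 0 rs i - nth 0 rs j) -> i = j) &
          (forall x, o x -> exists2 a, a \in rs & inIdeal ord pi (x - a))].
Proof. exact: (svalP (cid (lf_residue hK))). Qed.

Lemma P1E x : P 1 x <-> inIdeal ord pi x.
Proof. by rewrite expr1. Qed.

Lemma rs_o (k : 'I_q) : o (nth 0 rs k).
Proof.
case: rsP => hs ho _ _; apply: ho; apply: mem_nth; by rewrite hs.
Qed.

Lemma rs_inj (i j : 'I_q) : P 1 (nth 0 rs i - nth 0 rs j) -> i = j.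
Proof.
case: rsP => _ _ hd _; rewrite P1E => h; apply: val_inj => /=; exact: hd.
Qed.

Lemma rs_cover x : o x -> exists k : 'I_q, P 1 (x - nth 0 rs k).
Proof.
case: rsP => hs _ _ hc /hc [a ar ha].
have kq : (index a rs < q)%N by rewrite -hs index_mem.
exists (Ordinal kq); rewrite P1E /=; by rewrite nth_index.
Qed.

Definition digs M (f : {ffun 'I_M -> 'I_q}) : K :=
  \sum_(j < M) nth 0 rs (f j) * pi ^+ j.

Lemma digs_o M (f : {ffun 'I_M -> 'I_q}) : o (digs f).
Proof.
rewrite /digs; elim/big_ind: _ => //; [exact: o0| exact: oD|].
move=> j _; apply: oM; [exact: rs_o| apply: oX; exact: opi].
Qed.

Definition dtail M (f : {ffun 'I_M.+1 -> 'I_q}) : {ffun 'I_M -> 'I_q} :=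
  [ffun j => f (lift ord0 j)].

Lemma digsS M (f : {ffun 'I_M.+1 -> 'I_q}) :
  digs f = nth 0 rs (f ord0) + pi * digs (dtail f).
Proof.
rewrite /digs big_ord_recl expr0 mulr1 mulr_sumr; congr (_ + _).
apply: eq_bigr => j _; rewrite ffunE lift0 exprS; ring.
Qed.

Lemma digs_cover M x : o x -> exists f : {ffun 'I_M -> 'I_q}, P M (x - digs f).
Proof.
elim: M x => [|M IH] x ox.
  have [k _] := rs_cover ox; exists [ffun=> k].
  by rewrite /digs big_ord0 subr0; apply/P0o.
have [k hk] := rs_cover ox.
have [t [ot et]] := hk; rewrite expr1 in et.
have [g hg] := IH t ot.
pose f : {ffun 'I_M.+1 -> 'I_q} :=
  [ffun j => if unlift ord0 j is Some j' then g j' else k].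
have tf : dtail f = g by apply/ffunP => j; rewrite !ffunE liftK.
have f0 : f ord0 = k by rewrite ffunE unlift_none.
exists f; rewrite digsS tf f0.
have -> : x - (nth 0 rs k + pi * digs g) = pi ^+ 1 * (t - digs g).
  by rewrite expr1 mulrBr -et; ring.
by rewrite -add1n; apply: PpiM.
Qed.

Lemma digs_inj M (f g : {ffun 'I_M -> 'I_q}) : P M (digs f - digs g) -> f = g.
Proof.
elim: M f g => [|M IH] f g h.
  by apply/ffunP => -[].
rewrite !digsS in h.
have e : nth 0 rs (f ord0) + pi * digs (dtail f) - (nth 0 rs (g ord0) + pi * digs (dtail g))
   = (nth 0 rs (f ord0) - nth 0 rs (g ord0)) + pi ^+ 1 * (digs (dtail f) - digs (dtail g)).
  by rewrite expr1; ring.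
rewrite e in h.
have h1 : P 1 (pi ^+ 1 * (digs (dtail f) - digs (dtail g))).
  by apply: PMo; [exact: Ppi| apply: oB; exact: digs_o].
have h0 : P 1 (nth 0 rs (f ord0) - nth 0 rs (g ord0)).
  have := PB (Pmono (isT : (1 <= M.+1)%N) h) h1; by rewrite addrK.
have f0 := rs_inj h0.
rewrite f0 subrr add0r in h.
have ht := IH _ _ (PpiM_inv (h : P (1 + M) _)).
apply/ffunP => j; case: (unliftP ord0 j) => [j' ->|->] //.
by have := congr1 (fun F : {ffun 'I_M -> 'I_q} => F j') ht; rewrite !ffunE.
Qed.

Variable n : nat.
Local Notation V := (vecK K n).

Definition FV M := {ffun 'I_n -> {ffun 'I_M -> 'I_q}}.

Definition vec M (F : FV M) : V := \row_i digs (F i).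

Lemma vecE M (F : FV M) i : vec F ord0 i = digs (F i).
Proof. by rewrite mxE. Qed.

Lemma vec_o M (F : FV M) : intOn ord (vec F).
Proof. by move=> i; rewrite vecE; exact: digs_o. Qed.

Lemma vec_cover M (x : V) : intOn ord x -> exists F : FV M, ballK ord pi (vec F) M x.
Proof.
move=> ox.
have : forall i : 'I_n, exists f : {ffun 'I_M -> 'I_q}, P M (x ord0 i - digs f).
  move=> i; exact: digs_cover.
case/fin_all_exists => f hf.
exists [ffun i => f i] => i; by rewrite vecE ffunE.
Qed.

Lemma vec_inj M (F G : FV M) : (forall i, P M (vec F ord0 i - vec G ord0 i)) -> F = G.
Proof.
move=> h; apply/ffunP => i; apply: digs_inj; by have := h i; rewrite !vecE.
Qed.

Lemma card_FV M : #|{: FV M}| = ((q ^ M) ^ n)%N.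
Proof. by rewrite card_ffun card_ffun !card_ord. Qed.

Local Notation On := (@intOn K ord n).

Local Open Scope classical_set_scope.

Lemma mem_bigU (I : eqType) (T : Type) (s : seq I) (F : I -> set T) x :
  (\big[setU/set0]_(i <- s) F i) x <-> exists2 i, i \in s & F i x.
Proof.
elim: s => [|i s IH]; first by rewrite big_nil; split=> // -[].
rewrite big_cons; split.
  case=> [h|/IH [j js hj]]; first by exists i; rewrite ?mem_head.
  by exists j; rewrite // in_cons js orbT.
move=> [j]; rewrite in_cons => /orP [/eqP ->|js] hj; first by left.
by right; apply/IH; exists j.
Qed.

Lemma ball_o (c : V) m : intOn ord c -> ballK ord pi c m `<=` On.
Proof.
move=> oc x hx i; have := hx i => /P_o h.
have := oD h (oc i); by rewrite subrK.
Qed.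

Lemma ball_sym (c x : V) m : ballK ord pi c m x -> ballK ord pi x m c.
Proof. by move=> h i; have := PN (h i); rewrite opprB. Qed.

Lemma ball_trans (c x y : V) m : ballK ord pi c m x -> ballK ord pi x m y -> ballK ord pi c m y.
Proof. by move=> h1 h2 i; have := PD (h2 i) (h1 i); rewrite addrA subrK. Qed.

Definition ball0 m : set V := ballK ord pi (0 : V) m.

Lemma ball_translate (c : V) m : ballK ord pi c m = translate c (ball0 m).
Proof.
apply/seteqP; split => x.
  move=> hx; exists (x - c); last by rewrite subrK.
  by move=> i; rewrite /ball0 !mxE subr0; exact: hx i.
move=> [y hy <-] i; have := hy i; rewrite !mxE subr0 => h.
by rewrite addrK.
Qed.

Lemma ball0_o m : ball0 m `<=` On.
Proof. apply: ball_o => i; rewrite mxE; exact: o0. Qed.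

Variables (R : realType) (mu : {measure set (kspace ord pi n) -> \bar R}).
Hypothesis hmu : is_haar_on_On mu.
Local Notation S := (kspace ord pi n).

Lemma ball_meas (c : V) m : measurable (ballK ord pi c m : set S).
Proof. apply: sub_sigma_algebra; by exists c, m. Qed.

Lemma mu_ball (c : V) m : intOn ord c -> mu (ballK ord pi c m : set S) = mu (ball0 m : set S).
Proof.
move=> oc; rewrite ball_translate; case: hmu => _ h; apply: h => //.
  exact: ball_meas.
exact: ball0_o.
Qed.

Lemma addU (I : eqType) (s : seq I) (F : I -> set S) : uniq s ->
  (forall i, measurable (F i)) -> (forall i j, i != j -> F i `&` F j = set0) ->
  measurable (\big[setU/set0]_(i <- s) F i) /\
  mu (\big[setU/set0]_(i <- s) F i) = \sum_(i <- s) mu (F i).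
Proof.
move=> us mF dF; split; first by apply: bigsetU_measurable => i _.
elim: s us => [|i s IH] /=; first by rewrite !big_nil measure0.
move=> /andP [ni us]; rewrite !big_cons measureU //.
- by congr (_ + _); exact: IH us.
- by apply: (@bigsetU_measurable _ S) => j _.
apply/seteqP; split => // x [hi /mem_bigU [j js hj]].
have ij : i != j by apply/eqP => e; rewrite e js in ni.
by rewrite -(dF _ _ ij); split.
Qed.

Lemma mu_o : mu (On : set S) = 1%E.
Proof. by case: hmu. Qed.

Lemma On_ball : On = ball0 0.
Proof.
apply/seteqP; split => x hx i.
  rewrite /ball0 mxE subr0 expr0; apply/P0o; exact: hx i.
by have := hx i; rewrite mxE subr0 => /P_o.
Qed.

Lemma On_meas : measurable (On : set S).
Proof. rewrite On_ball; exact: ball_meas. Qed.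

Lemma mu_le1 (A : set S) : measurable A -> A `<=` On -> (mu A <= 1)%E.
Proof.
move=> mA sA; rewrite -mu_o; apply: le_measure => //; rewrite inE //; exact: On_meas.
Qed.

Lemma mu_fin (A : set S) : measurable A -> A `<=` On ->
  mu A = (fine (mu A))%:E.
Proof.
move=> mA sA; have h1 := mu_le1 mA sA.
have : mu A \is a fin_num.
  by rewrite ge0_fin_numE ?measure_ge0 // (le_lt_trans h1) ?ltry.
by move=> h; rewrite fineK.
Qed.


Definition invS M (A : set V) :=
  A `<=` On /\ (forall x y, A x -> ballK ord pi x M y -> A y).

Definition Dec M (A : set V) (F : FV M) : set V :=
  if `[< A (vec F) >] then ballK ord pi (vec F) M else set0.

Lemma decomp M A : invS M A ->
  A = \big[setU/set0]_(F <- index_enum {: FV M}) Dec A F.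
Proof.
move=> [sA iA]; apply/seteqP; split => x.
  move=> Ax; have [F hF] := vec_cover M (sA x Ax).
  apply/mem_bigU; exists F; first by rewrite mem_index_enum.
  have AF : A (vec F) by apply: iA Ax _; exact: ball_sym.
  by rewrite /Dec; case: asboolP.
move/mem_bigU => [F _]; rewrite /Dec; case: asboolP => // AF hx.
exact: iA AF hx.
Qed.

Lemma Dec_meas M A (F : FV M) : measurable (Dec A F : set S).
Proof. rewrite /Dec; case: asboolP => _; [exact: ball_meas| exact: measurable0]. Qed.

Lemma ball_disj M (F G : FV M) : F != G ->
  ballK ord pi (vec F) M `&` ballK ord pi (vec G) M = set0.
Proof.
move=> FG; apply/seteqP; split => // x [h1 h2].
apply: (negP FG); apply/eqP; apply: vec_inj => i.
have := PB (h2 i) (h1 i).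
have -> : x ord0 i - vec G ord0 i - (x ord0 i - vec F ord0 i) = vec F ord0 i - vec G ord0 i by ring.
done.
Qed.

Lemma Dec_disj M A (F G : FV M) : F != G -> Dec A F `&` Dec A G = set0.
Proof.
move=> FG; rewrite /Dec; case: asboolP => _; last by rewrite set0I.
case: asboolP => _; last by rewrite setI0.
exact: ball_disj.
Qed.

Definition bm M := fine (mu (ball0 M : set S)).

Lemma mu_ball0 M : mu (ball0 M : set S) = (bm M)%:E.
Proof. apply: mu_fin; [exact: ball_meas| exact: ball0_o]. Qed.

Lemma measA M A : invS M A -> measurable (A : set S) /\
  mu (A : set S) = (\sum_(F : FV M) (if `[< A (vec F) >] then bm M else 0))%:E.
Proof.
move=> iA; have eA := decomp iA.
have [h1 h2] := addU (index_enum_uniq {: FV M}) (@Dec_meas M A) (@Dec_disj M A).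
rewrite -eA in h1 h2.
split => //; rewrite h2 -sumEFin; apply: eq_bigr => F _.
rewrite /Dec; case: asboolP => AF.
  by rewrite mu_ball ?mu_ball0 //; exact: vec_o.
by rewrite measure0.
Qed.

Lemma inv_On M : invS M On.
Proof.
split => // x y ox hy; apply: (ball_o ox hy).
Qed.

Lemma bm_card M : (#|{: FV M}|)%:R * bm M = 1.
Proof.
have [_ h] := measA (inv_On M); rewrite mu_o in h.
have e : \sum_(F : FV M) (if `[< On (vec F) >] then bm M else 0) = \sum_(F : FV M) bm M.
  by apply: eq_bigr => F _; case: asboolP => // h'; exfalso; apply: h'; exact: vec_o.
move: h; rewrite e sumr_const => -[] h.
by rewrite mulr_natl h.
Qed.

Variable e : nat.
Hypothesis h2 : (2 : K) != 0.
Hypothesis he : ord 2 = e%:Z.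
Variable a : 'I_n -> K.
Hypothesis haniso : anisotropic a.
Hypothesis hord : forall i : 'I_n, 0 <= ord (a i) <= 1.

Local Notation B := (diagQF a).

Lemma P2 k y : P k y -> P (e + k) (2 * y).
Proof. apply: PMM; rewrite PE // he //. Qed.

Lemma I2E l y : inIdeal ord (2 * pi ^+ l) y <-> P (e + l) y.
Proof.
apply: inIdeal_eqord; rewrite ?mulf_neq0 ?pX_neq0 //.
by rewrite ordM ?pX_neq0 // he !ord_pi_exp PoszD.
Qed.

Definition ev i s : V := \row_j (if j == i then s else 0).

Lemma B_add_ev (x : V) i s :
  B (x + ev i s) = B x + a i * (2 * x ord0 i * s + s ^+ 2).
Proof.
rewrite /diagQF (bigD1 i) //= [in RHS](bigD1 i) //= !mxE eqxx.
have -> : \sum_(j < n | j != i) a j * (x + ev i s) ord0 j ^+ 2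
        = \sum_(j < n | j != i) a j * x ord0 j ^+ 2.
  apply: eq_bigr => j ji; rewrite !mxE (negbTE ji) addr0 //.
ring.
Qed.

Lemma ev_i i s : ev i s ord0 i = s.
Proof. by rewrite mxE eqxx. Qed.

Lemma ev_j i j s : j != i -> ev i s ord0 j = 0.
Proof. by move=> ji; rewrite mxE (negbTE ji). Qed.

Lemma a_neq0 i : a i != 0.
Proof.
apply/negP => /eqP ai0.
have : B (0 + ev i 1) = 0 by rewrite B_add_ev /diagQF big1 ?ai0 ?mul0r ?add0r // => j _; rewrite mxE expr0n mulr0.
move/haniso; rewrite add0r => /(congr1 (fun v : V => v ord0 i)).
by rewrite ev_i mxE; apply/eqP; exact: oner_neq0.
Qed.

Lemma a_o i : o (a i).
Proof. by right; case/andP: (hord i). Qed.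

Lemma B_diff (x y : V) : B y - B x =
  \sum_(i < n) a i * ((y ord0 i - x ord0 i) * (2 * x ord0 i + (y ord0 i - x ord0 i))).
Proof.
rewrite /diagQF -sumrB; apply: eq_bigr => i _; ring.
Qed.

Lemma B_inv M k (x y : V) : (k <= e + M)%N -> (k <= M + M)%N -> On x ->
  ballK ord pi x M y -> P k (B y - B x).
Proof.
move=> k1 k2 ox hy; rewrite B_diff; elim/big_ind: _ => //; first exact: P0.
  exact: PD.
move=> i _; apply: PoM; last exact: a_o.
have hd := hy i; rewrite mulrDr; apply: PD.
  rewrite mulrCA; apply: (Pmono k1); apply: P2; apply: PMo => //; exact: ox i.
apply: (Pmono k2); exact: PMM.
Qed.

Lemma B_o (x : V) : On x -> o (B x).
Proof.
move=> ox; rewrite /diagQF; elim/big_ind: _ => //; [exact: o0|exact: oD|].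
move=> i _; apply: oM; [exact: a_o| apply: oX; exact: ox i].
Qed.

Lemma Xset_inv l rho M : (l <= M)%N -> (e + l <= M + M)%N ->
  invS M (Xset ord pi a l rho).
Proof.
move=> lM eM; split; first by move=> x [].
move=> x y [ox hx] hy; split; first exact: (ball_o ox hy).
rewrite I2E in hx *.
have -> : B y - rho = (B y - B x) + (B x - rho) by ring.
apply/I2E; apply: PD; last exact: hx.
apply: (B_inv (M:=M)) => //; by rewrite leq_add2l.
Qed.

(* Hensel: 1 + 4 pi t is a square *)
Section Hensel.
Variable t : K.
Hypothesis ot : o t.

Fixpoint hs k : K := if k is k'.+1 then pi * t - hs k' ^+ 2 else 0.

Lemma hs_P1 k : P 1 (hs k).
Proof.
elim: k => [|k IH] /=; first exact: P0.
apply: PB; first by apply: PMo => //; rewrite -[pi]expr1; exact: Ppi.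
rewrite expr2; apply: PMo => //; exact: P_o IH.
Qed.

Lemma hs_diff k : P k.+1 (hs k.+1 - hs k).
Proof.
elim: k => [|k IH].
  rewrite /= expr0n /= subr0 subr0; apply: PMo => //; rewrite -[pi]expr1; exact: Ppi.
have -> : hs k.+2 - hs k.+1 = - ((hs k.+1 - hs k) * (hs k.+1 + hs k)) by rewrite /=; ring.
apply: PN; rewrite -addn1; apply: PMM => //; apply: PD; exact: hs_P1.
Qed.

Lemma hs_near i d : P i (hs (i + d) - hs i).
Proof.
elim: d => [|d IH]; first by rewrite addn0 subrr; exact: P0.
have -> : hs (i + d.+1) - hs i = (hs (i + d).+1 - hs (i + d)) + (hs (i + d) - hs i).
  by rewrite addnS; ring.
apply: PD => //; apply: (Pmono _ (hs_diff _)); lia.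
Qed.

Lemma hs_near2 m i : (m <= i)%N -> P m (hs i - hs m).
Proof. by move=> mi; rewrite -(subnKC mi); exact: hs_near. Qed.

Lemma hs_cauchy : cauchyK ord pi hs.
Proof.
move=> m; exists m => i j mi mj.
have -> : hs i - hs j = (hs i - hs m) - (hs j - hs m) by ring.
apply: PB; exact: hs_near2.
Qed.

Lemma hensel_root : exists l, l + l ^+ 2 = pi * t.
Proof.
have [l hl] := lf_complete hK hs_cauchy.
have ol : o l.
  have [N hN] := hl 0%N.
  have := hN N (leqnn N) => /P_o h.
  have := oB (P_o (hs_P1 N)) h; by rewrite opprB addrC subrK.
exists l; apply/eqP; rewrite -subr_eq0; apply/eqP; apply: P_zero => m.
have [N hN] := hl m.
have -> : l + l ^+ 2 - pi * t = (l - hs N.+1) + (l - hs N) * (l + hs N).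
  by rewrite /=; ring.
apply: PD.
  by rewrite -opprB; apply: PN; apply: hN; exact: leqnSn.
apply: PMo; first by rewrite -opprB; apply: PN; apply: hN.
apply: oD => //; exact: P_o (hs_P1 N).
Qed.

Lemma hensel_sqrt : exists y, y ^+ 2 = 1 + 2 * 2 * pi * t.
Proof.
have [l hl] := hensel_root; exists (1 + 2 * l).
have -> : 2 * 2 * pi * t = 2 * 2 * (pi * t) by ring.
rewrite -hl; ring.
Qed.
End Hensel.

Lemma unit_ord (u : K) : o u -> ~ P 1 u -> u != 0 /\ ord u = 0.
Proof. exact: not_P1_unit. Qed.

Lemma aniso_P1 (x : V) : On x -> P (e + e + 2) (B x) -> forall i, P 1 (x ord0 i).
Proof.
move=> ox hB i; apply: contrapT => nP.
have [x0 xo] := not_P1_unit (ox i) nP.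
have ai0 := a_neq0 i.
pose c := a i * x ord0 i ^+ 2.
have c0 : c != 0 by rewrite mulf_neq0 // expf_neq0.
have d0 : 2 * 2 * pi * c != 0 by rewrite !mulf_neq0 // pi_neq0.
have hI : inIdeal ord (2 * 2 * pi * c) (B x).
  case: (eqVneq (B x) 0) => [->|b0]; first by exists 0; split; [exact: o0|rewrite mulr0].
  apply/inIdeal_ord => //; move: hB; rewrite PE // => hB.
  rewrite /c !ordM ?mulf_neq0 ?expf_neq0 ?pi_neq0 // he ord_pi xo.
  have := hord i; move/andP=> [_ h1]; move: hB h1; lia.
move/inIdealE: hI => /(_ d0) ht.
have [v hv] := hensel_sqrt (oN ht).
pose y : V := x + ev i (x ord0 i * v - x ord0 i).
have By : B y = 0.
  rewrite /y B_add_ev.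
  have -> : 2 * x ord0 i * (x ord0 i * v - x ord0 i) + (x ord0 i * v - x ord0 i) ^+ 2
      = x ord0 i ^+ 2 * (v ^+ 2 - 1) by ring.
  rewrite hv; rewrite /c; field.
  rewrite x0 ai0 pi_neq0 /=; have -> : (4 : K) = 2 * 2 by ring.
  by rewrite mulf_neq0.
have := haniso By => /(congr1 (fun w : V => w ord0 i)).
rewrite /y mxE ev_i mxE addrC subrK => /eqP; rewrite mulf_eq0 (negbTE x0) /= => /eqP v0.
move: hv; rewrite v0 expr0n /= => h0.
apply: (@P1_1); have -> : (1 : K) = - (2 * 2 * pi * - (B x / (2 * 2 * pi * c))).
  by apply/eqP; rewrite -subr_eq0 opprK -h0.
apply: PN; set w := B x / (2 * 2 * pi * c); rewrite -!mulrA; apply: PoM; last exact: (onat 2).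
apply: PoM; last exact: (onat 2).
apply: PMo; first by rewrite -[pi]expr1; exact: Ppi.
by apply: oN.
Qed.

Definition scale (A : set V) : set V := [set (pi *: (x : 'rV[K]_n) : V) | x in A].

Lemma scaleE (y : V) i : (pi *: (y : 'rV[K]_n) : V) ord0 i = pi * y ord0 i.
Proof. by rewrite mxE. Qed.

Lemma B_scale (x : V) : B (pi *: (x : 'rV[K]_n)) = pi ^+ 2 * B x.
Proof.
rewrite /diagQF mulr_sumr; apply: eq_bigr => i _; rewrite mxE; ring.
Qed.

Lemma unscale (y : V) : (y : V) = (pi *: (pi^-1 *: (y : 'rV[K]_n)) : V).
Proof. by apply/rowP => i; rewrite !mxE mulrA divff ?pi_neq0 // mul1r. Qed.

Lemma unscaleE (y : V) i : ((pi^-1 *: (y : 'rV[K]_n)) : V) ord0 i = y ord0 i / pi.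
Proof. by rewrite mxE mulrC. Qed.

Lemma Xset_scale l : (e <= l)%N ->
  Xset ord pi a l.+2 0 = scale (Xset ord pi a l 0).
Proof.
move=> el; apply/seteqP; split => y.
  move=> [oy]; rewrite subr0 I2E => hy.
  have hP : forall i, P 1 (y ord0 i).
    apply: aniso_P1 => //; apply: Pmono hy; lia.
  exists (pi^-1 *: (y : 'rV[K]_n)); last by rewrite -unscale.
  split.
    move=> i; rewrite unscaleE; have := hP i; rewrite P1E; rewrite inIdealE ?pi_neq0 //.
  rewrite subr0 I2E; apply: (@PpiM_inv _ 2); rewrite -B_scale -unscale.
  by rewrite (_ : (2 + (e + l))%N = e + l.+2)%N; last lia.
move=> [x [ox hx] <-]; split.
  by move=> i; rewrite scaleE; apply: oM; [exact: opi| exact: ox i].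
move: hx; rewrite !subr0 !I2E B_scale => h.
by rewrite (_ : (e + l.+2 = 2 + (e + l))%N); [exact: PpiM| lia].
Qed.

Definition Dec2 M (A : set V) (F : FV M) : set V :=
  if `[< A (vec F) >] then ballK ord pi (pi *: (vec F : 'rV[K]_n) : V) M.+1 else set0.

Lemma Dec2_meas M A (F : FV M) : measurable (Dec2 A F : set S).
Proof. rewrite /Dec2; case: asboolP => _; [exact: ball_meas| exact: measurable0]. Qed.

Lemma Dec2_disj M A (F G : FV M) : F != G -> Dec2 A F `&` Dec2 A G = set0.
Proof.
move=> FG; rewrite /Dec2; case: asboolP => _; last by rewrite set0I.
case: asboolP => _; last by rewrite setI0.
apply/seteqP; split => // x [g1 g2].
apply: (negP FG); apply/eqP; apply: vec_inj => i.
have := PB (g2 i) (g1 i); rewrite !scaleE.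
have -> : x ord0 i - pi * vec G ord0 i - (x ord0 i - pi * vec F ord0 i)
   = pi ^+ 1 * (vec F ord0 i - vec G ord0 i) by rewrite expr1; ring.
by rewrite -addn1 addnC; exact: PpiM_inv.
Qed.

Lemma decomp2 M A : invS M A ->
  scale A = \big[setU/set0]_(F <- index_enum {: FV M}) Dec2 A F.
Proof.
move=> [sA iA]; apply/seteqP; split => y.
  move=> [x Ax <-]; have [F hF] := vec_cover M (sA x Ax).
  apply/mem_bigU; exists F; first by rewrite mem_index_enum.
  have AF : A (vec F) by apply: iA Ax _; exact: ball_sym.
  rewrite /Dec2; case: asboolP => // _ i; rewrite !scaleE.
  have -> : pi * x ord0 i - pi * vec F ord0 i = pi ^+ 1 * (x ord0 i - vec F ord0 i).
    by rewrite expr1; ring.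
  by rewrite -addn1 addnC; apply: PpiM; exact: hF i.
move/mem_bigU => [F _]; rewrite /Dec2; case: asboolP => // AF hy.
exists (pi^-1 *: (y : 'rV[K]_n)); last by rewrite -unscale.
apply: (iA _ _ AF) => i; rewrite unscaleE.
apply: (@PpiM_inv _ 1); rewrite add1n.
have -> : pi ^+ 1 * (y ord0 i / pi - vec F ord0 i) = y ord0 i - pi * vec F ord0 i.
  by rewrite expr1 mulrBr mulrCA divff ?pi_neq0 // mulr1.
by have := hy i; rewrite scaleE.
Qed.

Lemma measA2 M A : invS M A -> measurable (scale A : set S) /\
  mu (scale A : set S) = (\sum_(F : FV M) (if `[< A (vec F) >] then bm M.+1 else 0))%:E.
Proof.
move=> iA; have eA := decomp2 iA.
have [h1 h3] := addU (index_enum_uniq {: FV M}) (@Dec2_meas M A) (@Dec2_disj M A).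
rewrite -eA in h1 h3.
split => //; rewrite h3 -sumEFin; apply: eq_bigr => F _.
rewrite /Dec2; case: asboolP => AF.
  rewrite mu_ball ?mu_ball0 // => i; rewrite scaleE; apply: oM; [exact: opi| exact: vec_o].
by rewrite measure0.
Qed.

Lemma q_gt0 : (0 < q)%N.
Proof. by have [k _] := rs_cover o0; case: k => k /=; case: q. Qed.

Lemma bmE M : bm M = (((q ^ M) ^ n)%N%:R)^-1.
Proof.
have h := bm_card M; rewrite card_FV in h.
have nz : ((q ^ M) ^ n)%N%:R != 0 :> R.
  by rewrite pnatr_eq0 -lt0n !expn_gt0 q_gt0.
by apply: (mulfI nz); rewrite h divff.
Qed.

Lemma bmS M : bm M.+1 = bm M / (q ^ n)%N%:R.
Proof.
rewrite !bmE expnS expnMn natrM invfM mulrC. reflexivity.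
Qed.

Lemma mu_scale M A : invS M A ->
  fine (mu (scale A : set S)) = fine (mu (A : set S)) / (q ^ n)%N%:R.
Proof.
move=> iA; have [_ h1] := measA iA; have [_ h3] := measA2 iA.
rewrite h1 h3 /= mulr_suml; apply: eq_bigr => F _; rewrite bmS.
by case: asboolP; rewrite ?mul0r.
Qed.

Lemma XB_rec l : (e <= l)%N ->
  Xl mu a l.+2 0 = Xl mu a l 0 / (q ^ n)%N%:R.
Proof.
move=> el; rewrite /Xl Xset_scale //; apply: (mu_scale (M:=l)).
apply: Xset_inv => //; lia.
Qed.

Lemma ordD_small u w (d : nat) : u != 0 -> ord u = d%:Z -> P d.+1 w ->
  u + w != 0 /\ ord (u + w) = d%:Z.
Proof.
move=> u0 hu hw; case: (eqVneq w 0) => [->|w0]; first by rewrite addr0.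
move: hw; rewrite PE // => hw.
have s0 : u + w != 0.
  apply/eqP => e0; have : w = - u by apply/eqP; rewrite -subr_eq0 opprK addrC e0.
  move=> wu; move: hw; rewrite wu ordN // hu; lia.
split => //; have h1 := lf_add hK u0 w0 s0.
have h3 : u + w + - w != 0 by rewrite addrK.
have nw : - w != 0 by rewrite oppr_eq0.
have h4 := lf_add hK s0 nw h3.
rewrite addrK ordN // in h4.
rewrite min_l in h1; last by rewrite hu; lia.
move: h4; case: (leP (ord (u + w)) (ord w)) => h5.
  by move=> h6; rewrite -hu; apply/eqP; rewrite eq_le h6 h1.
move=> h6; move: hw h6; rewrite hu; lia.
Qed.

Variable T : nat.
Local Notation rho := (pi ^+ (2 * T)).

Definition Q (i : 'I_n) (d : nat) (x : V) : Prop :=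
  [/\ forall j : 'I_n, (j < i)%N -> P T.+1 (a j * x ord0 j),
      a i * x ord0 i != 0 & ord (a i * x ord0 i) = d%:Z].

Lemma term_small (x : V) j : On x -> P T.+1 (a j * x ord0 j) ->
  P (2 * T).+1 (a j * x ord0 j ^+ 2).
Proof.
move=> ox hj; case: (eqVneq (x ord0 j) 0) => [->|x0].
  rewrite expr0n mulr0; exact: P0.
have ai0 := a_neq0 j.
move: hj; rewrite !PE ?mulf_neq0 ?expf_neq0 // !ordM ?expf_neq0 //.
have := hord j; move/andP => [h0 h1]; lia.
Qed.

Lemma Q_exists l (x : V) : ((2 * T).+1 <= e + l)%N -> On x ->
  P (e + l) (B x - rho) -> exists (i : 'I_n) (d : 'I_T.+1), Q i d x.
Proof.
move=> Tl ox hx.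
pose xa k := if (insub k : option 'I_n) is Some i then a i * x ord0 i else 0.
have xaE (i : 'I_n) : xa i = a i * x ord0 i by rewrite /xa valK.
pose pb k := (k < n)%N && ~~ `[< P T.+1 (xa k) >].
have [k pk] : exists k, pb k.
  apply: contrapT => hn.
  have all_small : forall j : 'I_n, P T.+1 (a j * x ord0 j).
    move=> j; apply: contrapT => hj; apply: hn; exists j.
    by rewrite /pb ltn_ord /= xaE; case: asboolP.
  have hB : P (2 * T).+1 (B x).
    rewrite /diagQF; elim/big_ind: _ => //; [exact: P0|exact: PD|].
    move=> j _; exact: term_small.
  have hr : P (2 * T).+1 rho.
    have -> : rho = B x - (B x - rho) by ring.
    apply: PB => //; exact: Pmono Tl hx.
  by move: hr; rewrite PE ?pX_neq0 // ord_pi_exp; lia.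
case: (ex_minnP (ex_intro _ k pk)) => m pm mmin.
move/andP: pm => [mn pm]; pose i := Ordinal mn.
have hi : ~ P T.+1 (a i * x ord0 i) by rewrite -xaE; move: pm; case: asboolP.
have [u0 hu] : a i * x ord0 i != 0 /\ (0 <= ord (a i * x ord0 i)).
  have o1 : o (a i * x ord0 i) by apply: oM; [exact: a_o| exact: ox i].
  have nz : a i * x ord0 i != 0 by apply/eqP => e0; apply: hi; rewrite e0; exact: P0.
  by split => //; move/oE: o1 => /(_ nz).
have dT : (`|ord (a i * x ord0 i)| < T.+1)%N.
  have : ~ (T.+1%:Z <= ord (a i * x ord0 i)) by move=> h; apply: hi; rewrite PE.
  move: hu; lia.
exists i, (Ordinal dT); split => //=.
  move=> j ji; apply: contrapT => hj.
  have := mmin j; rewrite /pb (ltn_trans ji mn) /= xaE.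
  case: asboolP => // _ /(_ isT); rewrite leqNgt ji //.
by rewrite gez0_abs.
Qed.

Lemma Q_uniq i i' d d' (x : V) : (d <= T)%N -> (d' <= T)%N ->
  Q i d x -> Q i' d' x -> i = i' /\ d = d'.
Proof.
move=> dT d'T [g1 g2 g3] [g1' g2' g3'].
have ii : i = i'.
  apply: val_inj => /=; case: (ltngtP i i') => // hlt.
  - have := g1' i hlt; rewrite PE // g3; lia.
  - have := g1 i' hlt; rewrite PE // g3'; lia.
split => //; move: g3'; rewrite -ii g3; lia.
Qed.

Lemma Q_ball M i (d : nat) (x y : V) : (d <= T)%N -> (T < M)%N ->
  Q i d x -> ballK ord pi x M y -> Q i d y.
Proof.
move=> dT TM [g1 g2 g3] hy.
have eq j : a j * y ord0 j = a j * x ord0 j + a j * (y ord0 j - x ord0 j) by ring.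
have sm j : P T.+1 (a j * (y ord0 j - x ord0 j)).
  apply: (Pmono TM); apply: PoM; [exact: hy j| exact: a_o].
split.
- move=> j ji; rewrite eq; apply: PD; [exact: g1| exact: sm].
- have hs : P d.+1 (a i * (y ord0 i - x ord0 i)) by apply: (Pmono _ (sm i)); lia.
  by rewrite eq; have [] := ordD_small g2 g3 hs.
- have hs : P d.+1 (a i * (y ord0 i - x ord0 i)) by apply: (Pmono _ (sm i)); lia.
  by rewrite eq; have [] := ordD_small g2 g3 hs.
Qed.

Lemma ev_ball (x : V) i M r : o r -> ballK ord pi x M (x + ev i (pi ^+ M * r)).
Proof.
move=> orr j; rewrite mxE addrAC subrr add0r mxE.
case: ifP => _; [exact: PMo (Ppi M) orr| exact: P0].
Qed.

Lemma ev_opp i s : ev i (- s) = - ev i s.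
Proof. by apply/rowP => j; rewrite !mxE; case: ifP; rewrite ?oppr0. Qed.

Lemma P2l z l k : P (e + l + k) (2 * pi ^+ l * z) <-> P k z.
Proof.
case: (eqVneq z 0) => [->|z0]; first by rewrite mulr0; split => _; exact: P0.
rewrite !PE ?mulf_neq0 ?pX_neq0 // !ordM ?pX_neq0 ?mulf_neq0 //.
rewrite (_ : ord 2 = e%:Z); last exact: he.
rewrite ord_pi_exp; first by split; lia.
exact: pX_neq0.
Qed.

Definition uQ i d (x : V) := a i * x ord0 i / pi ^+ d.

Lemma uQ_unit i d (x : V) : Q i d x -> uQ i d x != 0 /\ ord (uQ i d x) = 0.
Proof.
move=> [_ g2 g3]; split; first by rewrite mulf_neq0 ?invr_neq0 ?pX_neq0.
rewrite ordM ?invr_neq0 ?pX_neq0 // ordV ?pX_neq0 // g3 ord_pi_exp; lia.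
Qed.

Lemma uQ_o i d (x : V) : Q i d x -> o (uQ i d x).
Proof. by move=> /uQ_unit [u0 hu]; rewrite oE // hu. Qed.

Lemma K3 l i (d : nat) (x : V) r : (d <= T)%N -> ((2 * T) + e + 1 <= l)%N ->
  o r ->
  P (e + l).+1 (B (x + ev i (pi ^+ (l - d) * r)) - B x
                - 2 * pi ^+ l * (uQ i d x * r)).
Proof.
move=> dT hl orr; rewrite B_add_ev.
have dl : (d <= l)%N by lia.
have hp : pi ^+ l = pi ^+ (l - d) * pi ^+ d by rewrite -exprD subnK.
have -> : B x + a i * (2 * x ord0 i * (pi ^+ (l - d) * r) + (pi ^+ (l - d) * r) ^+ 2) -
    B x - 2 * pi ^+ l * (uQ i d x * r) = (pi ^+ (l - d) * pi ^+ (l - d)) * (a i * r ^+ 2).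
  rewrite /uQ hp; field; exact: pX_neq0.
apply: PMo; last by apply: oM; [exact: a_o| exact: oX].
rewrite -exprD; apply: Pmono (Ppi _); lia.
Qed.

Lemma K4 l i (d : nat) (y : V) r : (d <= T)%N -> ((2 * T) + e + 1 <= l)%N ->
  o r -> Q i d y -> P (e + l) (B y - rho) ->
  (P (e + l).+1 (B (y + ev i (pi ^+ (l - d) * - r)) - rho) <->
   P 1 ((B y - rho) / (2 * pi ^+ l) - uQ i d y * r)).
Proof.
move=> dT hl orr hQ hy.
have h20 : 2 * pi ^+ l != 0 by rewrite mulf_neq0 ?pX_neq0.
have E := @K3 l i d y (- r) dT hl (oN orr).
set c := (B y - rho) / (2 * pi ^+ l).
have ec : B y - rho = 2 * pi ^+ l * c by rewrite /c mulrC divfK.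
have -> : B (y + ev i (pi ^+ (l - d) * - r)) - rho =
   (B (y + ev i (pi ^+ (l - d) * - r)) - B y - 2 * pi ^+ l * (uQ i d y * - r))
   + 2 * pi ^+ l * (c - uQ i d y * r).
  by rewrite mulrBr -ec; ring.
rewrite -addn1 in E; rewrite -addn1 -(P2l _ l 1); split => h.
  by have := PB h E; rewrite addrC addKr.
by apply: PD.
Qed.

Lemma translateE (c : V) (A : set V) y : translate c A y <-> A (y - c).
Proof.
split; first by move=> [x Ax <-]; rewrite addrK.
by move=> h; exists (y - c) => //; rewrite subrK.
Qed.

Lemma inv_translate M A (c : V) : invS M A -> On c -> invS M (translate c A).
Proof.
move=> [sA iA] oc; split.
  move=> y /translateE /sA h i; have := oD (h i) (oc i); by rewrite !mxE subrK.
move=> x y /translateE Ax hy; apply/translateE; apply: iA Ax _ => i.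
have := hy i; by rewrite !mxE opprD addrACA subrr addr0.
Qed.

Lemma inv_I M A (C : set V) : invS M A ->
  (forall x y, A x -> C x -> ballK ord pi x M y -> C y) -> invS M (A `&` C).
Proof.
move=> [sA iA] hC; split; first by move=> x [/sA].
move=> x y [Ax Cx] hy; split; [exact: iA Ax hy| exact: hC x y Ax Cx hy].
Qed.

Lemma inv_meas M A : invS M A -> measurable (A : set S).
Proof. by move/measA => []. Qed.

Lemma addU_fine (I : eqType) (s : seq I) (F : I -> set S) : uniq s ->
  (forall i, measurable (F i)) -> (forall i, F i `<=` On) ->
  (forall i j, i != j -> F i `&` F j = set0) ->
  fine (mu (\big[setU/set0]_(i <- s) F i)) = \sum_(i <- s) fine (mu (F i)).
Proof.
move=> us mF sF dF; have [_ h] := addU us mF dF; rewrite h.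
rewrite (eq_bigr (fun i => (fine (mu (F i)))%:E)); last by move=> i _; apply: mu_fin.
by rewrite sumEFin.
Qed.

Section PartA.
Variable l : nat.
Hypothesis hl : ((2 * T) + e + 1 <= l)%N.

Definition XA k := Xset ord pi a k rho.
Definition Yp (i : 'I_n) (d : 'I_T.+1) := XA l `&` Q i d.
Definition Pp (i : 'I_n) (d : 'I_T.+1) := XA l.+1 `&` Q i d.
Definition cvec (i : 'I_n) (d : nat) (k : 'I_q) : V := ev i (pi ^+ (l - d) * nth 0 rs k).

Lemma inv_XA : invS l.+1 (XA l).
Proof. apply: Xset_inv; lia. Qed.
Lemma inv_XA1 : invS l.+1 (XA l.+1).
Proof. apply: Xset_inv; lia. Qed.

Lemma inv_Q M A i (d : 'I_T.+1) : (T < M)%N -> invS M A -> invS M (A `&` Q i d).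
Proof.
move=> TM iA; apply: inv_I => // x y _ Cx hy; apply: Q_ball Cx hy => //.
by rewrite -ltnS.
Qed.

Lemma inv_Yp i d : invS l.+1 (Yp i d).
Proof. apply: inv_Q; [lia| exact: inv_XA]. Qed.
Lemma inv_Pp i d : invS l.+1 (Pp i d).
Proof. apply: inv_Q; [lia| exact: inv_XA1]. Qed.

Lemma cvec_o i d k : On (cvec i d k).
Proof.
move=> j; rewrite mxE; case: ifP => _; last exact: o0.
apply: oM; [apply: oX; exact: opi| exact: rs_o].
Qed.

Lemma XA_E k (x : V) : XA k x <-> On x /\ P (e + k) (B x - rho).
Proof. by rewrite /XA /Xset /=; split => -[g1 g2]; split => //; move: g2; rewrite I2E. Qed.

Definition cY (y : V) := (B y - rho) / (2 * pi ^+ l).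

Lemma memT i (d : 'I_T.+1) k y :
  translate (cvec i d k) (Pp i d) y <->
  (Yp i d y /\ P 1 (cY y - uQ i d y * nth 0 rs k)).
Proof.
have dT : (d <= T)%N by rewrite -ltnS.
have TM : (T < l - d)%N by lia.
have ork := rs_o k.
split.
  move=> [x [/XA_E [ox hx] Qx] <-].
  have bx : ballK ord pi x (l - d) (x + cvec i d k) by exact: ev_ball.
  have oy := ball_o ox bx.
  have Qy := Q_ball dT TM Qx bx.
  have Yy : Yp i d (x + cvec i d k).
    split => //; apply/XA_E; split => //.
    have E := @K3 l i d x (nth 0 rs k) dT hl ork.
    have -> : B (x + cvec i d k) - rho =
      (B (x + cvec i d k) - B x - 2 * pi ^+ l * (uQ i d x * nth 0 rs k))
      + (2 * pi ^+ l * (uQ i d x * nth 0 rs k) + (B x - rho)) by ring.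
    apply: PD; first exact: Pmono E.
    apply: PD; first by rewrite -[(e + l)%N]addn0; apply/(P2l _ l 0); apply/P0o; apply: oM => //; exact: uQ_o Qx.
    apply: Pmono hx; lia.
  split => //.
  have [/XA_E [_ hy] _] := Yy.
  apply/(K4 dT hl ork Qy hy).
  have -> : x + cvec i d k + ev i (pi ^+ (l - d) * - nth 0 rs k) = x.
    by rewrite /cvec mulrN ev_opp addrK.
  by rewrite -addnS.
move=> [[/XA_E [oy hy] Qy] hP].
apply/translateE; split; last first.
  rewrite /cvec -ev_opp -mulrN; apply: Q_ball dT TM Qy _; exact: ev_ball (oN ork).
apply/XA_E; split.
  rewrite /cvec -ev_opp -mulrN; exact: (ball_o oy (@ev_ball y i (l - d) _ (oN ork))).
rewrite addnS /cvec -ev_opp -mulrN; apply/(K4 dT hl ork Qy hy); exact: hP.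
Qed.


Definition IT := ('I_n * 'I_T.+1)%type.
Definition Zp k (p : IT) := XA k `&` Q p.1 p.2.

Lemma XA_dec k : ((2 * T).+1 <= e + k)%N ->
  XA k = \big[setU/set0]_(p <- index_enum {: IT}) Zp k p.
Proof.
move=> Tk; apply/seteqP; split => x.
  move=> hx; have [ox hB] : On x /\ P (e + k) (B x - rho) by apply/XA_E.
  have [i [d Qx]] := Q_exists Tk ox hB.
  apply/mem_bigU; exists (i, d); first by rewrite mem_index_enum.
  by split.
by move/mem_bigU => [p _ []].
Qed.

Lemma Zp_disj k (p p' : IT) : p != p' -> Zp k p `&` Zp k p' = set0.
Proof.
move=> pp; apply/seteqP; split => // x [[_ Q1] [_ Q2]].
case: p p' pp Q1 Q2 => [i d] [i' d'] /= pp Q1 Q2.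
have dT : (d <= T)%N by rewrite -ltnS.
have dT' : (d' <= T)%N by rewrite -ltnS.
have [e1 e2] := Q_uniq dT dT' Q1 Q2.
apply: (negP pp); apply/eqP; rewrite e1; congr pair; exact: val_inj.
Qed.

Lemma inv_Zp k (p : IT) : (l <= k)%N -> (k <= l.+1)%N -> invS l.+1 (Zp k p).
Proof.
move=> lk kl; apply: inv_Q; first lia.
apply: Xset_inv; lia.
Qed.

Lemma fine_XA k : (l <= k)%N -> (k <= l.+1)%N ->
  fine (mu (XA k : set S)) = \sum_(p : IT) fine (mu (Zp k p : set S)).
Proof.
move=> lk kl; rewrite {1}(XA_dec (k:=k)); last lia.
apply: addU_fine; first exact: index_enum_uniq.
- by move=> p; apply: inv_meas; exact: inv_Zp.
- by move=> p; case: (inv_Zp p lk kl).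
- exact: Zp_disj.
Qed.

Lemma Yp_dec i d : Yp i d =
  \big[setU/set0]_(k <- index_enum {: 'I_q}) translate (cvec i d k) (Pp i d).
Proof.
apply/seteqP; split => y.
  move=> hy; have hy' := hy; case: hy' => /XA_E [oy hB] Qy.
  have oc : o (cY y).
    have hB' : inIdeal ord (2 * pi ^+ l) (B y - rho) by apply/I2E.
    by move: hB'; rewrite inIdealE // mulf_neq0 ?pX_neq0.
  have [u0 hu] := uQ_unit Qy.
  have [k hk] := rs_cover (oM oc (o_inv_unit u0 hu)).
  apply/mem_bigU; exists k; first by rewrite mem_index_enum.
  apply/memT; split => //.
  have := PoM hk (uQ_o Qy).
  by rewrite mulrBr mulrCA divff // mulr1.
by move/mem_bigU => [k _ /memT []].
Qed.

Lemma T_disj i (d : 'I_T.+1) (k k' : 'I_q) : k != k' ->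
  translate (cvec i d k) (Pp i d) `&` translate (cvec i d k') (Pp i d) = set0.
Proof.
move=> kk; apply/seteqP; split => // y [/memT [[_ Qy] h1] /memT [_ h3]].
apply: (negP kk); apply/eqP; apply: rs_inj.
have [u0 hu] := uQ_unit Qy.
apply: (PM_unit (u:=uQ i d y)) => //.
have := PB h3 h1.
have -> : cY y - uQ i d y * nth 0 rs k' - (cY y - uQ i d y * nth 0 rs k)
  = (nth 0 rs k - nth 0 rs k') * uQ i d y by ring.
done.
Qed.

Lemma fine_Yp i d : fine (mu (Yp i d : set S)) = q%:R * fine (mu (Pp i d : set S)).
Proof.
have iP := inv_Pp i d.
have hm : forall k, measurable (translate (cvec i d k) (Pp i d) : set S).
  by move=> k; apply: inv_meas; apply: inv_translate iP (cvec_o i d k).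
have hs : forall k, translate (cvec i d k) (Pp i d) `<=` On.
  by move=> k; case: (inv_translate iP (cvec_o i d k)).
rewrite Yp_dec (addU_fine (index_enum_uniq _) hm hs (@T_disj i d)).
have e1 : forall k, fine (mu (translate (cvec i d k) (Pp i d) : set S)) = fine (mu (Pp i d : set S)).
  move=> k; case: hmu => _ ht; rewrite ht //;
    [exact: (cvec_o i d k) | exact: (inv_meas iP) | by case: iP].
rewrite (eq_bigr _ (fun k _ => e1 k)).
by rewrite sumr_const card_ord mulr_natl.
Qed.

Lemma XA_rec : fine (mu (XA l : set S)) = q%:R * fine (mu (XA l.+1 : set S)).
Proof.
rewrite fine_XA // fine_XA // mulr_sumr; apply: eq_bigr => -[i d] _.
exact: fine_Yp.
Qed.

End PartA.

Lemma XA_rec2 l : ((2 * T) + e + 1 <= l)%N ->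
  Xl mu a l.+1 rho = Xl mu a l rho / q%:R.
Proof.
move=> hl; rewrite /Xl; have := XA_rec hl; rewrite /XA => ->.
have q0 : q%:R != 0 :> R by rewrite pnatr_eq0 -lt0n q_gt0.
by rewrite [q%:R * _]mulrC mulfK.
Qed.
End Val.
Section Cplx.
Variable R : realType.
Local Notation C := R[i].
Local Open Scope classical_set_scope.

Lemma nE (z : C) : `|z| = (Normc.normc z)%:C.
Proof. by case: z => x y; rewrite normc_def. Qed.

Lemma nc_ge0 (z : C) : 0 <= Normc.normc z.
Proof. by case: z => x y /=; exact: sqrtr_ge0. Qed.

Lemma ncX (z : C) j : Normc.normc (z ^+ j) = Normc.normc z ^+ j.
Proof.
elim: j => [|j IH]; first by rewrite !expr0 Normc.normc1.
by rewrite !exprS Normc.normcM IH.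
Qed.

Lemma pow_small (r d : R) : 0 <= r -> r < 1 -> 0 < d -> exists N, r ^+ N < d.
Proof.
move=> r0 r1 d0.
have rn : `|r| < 1 by rewrite ger0_norm.
have h := @cvg_expr R r rn.
have := @cvgr_lt R nat _ _ _ 0 h d d0; case => N _ hN; exists N; exact: hN N (leqnn N).
Qed.

Lemma Ssplit (c : nat -> C) a b :
  \sum_(l < a + b) c l = \sum_(l < a) c l + \sum_(i < b) c (a + i)%N.
Proof. by rewrite big_split_ord. Qed.

Lemma Gp (c : nat -> C) (rho : C) L0 p : (0 < p)%N -> `|rho| < 1 ->
  (forall l, (L0 <= l)%N -> c (l + p)%N = rho * c l) ->
  cvgC (fun N => \sum_(l < N) c l)
    (\sum_(l < L0) c l + (\sum_(i < p) c (L0 + i)%N) / (1 - rho)).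
Proof.
move=> p0 r1 hc.
have r0 : 1 - rho != 0.
  rewrite subr_eq0; apply/eqP => e1; move: r1; rewrite -e1 normr1 ltxx //.
set A := \sum_(i < p) c (L0 + i)%N.
set lim := \sum_(l < L0) c l + A / (1 - rho).
pose E m := \sum_(l < L0 + m) c l - lim.
have EE m : E (m + p)%N = rho * E m.
  rewrite /E /lim (addnC m p) addnA !Ssplit.
  have -> : \sum_(i < m) c (L0 + p + i)%N = rho * \sum_(i < m) c (L0 + i)%N.
    rewrite mulr_sumr; apply: eq_bigr => i _.
    by rewrite -hc ?leq_addr // addnAC.
  rewrite -/A; field; exact: r0.
have EJ j r : E (j * p + r)%N = rho ^+ j * E r.
  elim: j => [|j IH]; first by rewrite mul0n add0n expr0 mul1r.
  have -> : (j.+1 * p + r = (j * p + r) + p)%N by rewrite mulSn; lia.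
  by rewrite EE IH exprS mulrA.
set r := Normc.normc rho.
have rr : r < 1 by move: r1; rewrite nE -(@ltcR R).
have rg0 : 0 <= r by exact: nc_ge0.
set C0 := \sum_(k < p) Normc.normc (E k).
have C0g : 0 <= C0 by apply: sumr_ge0 => k _; exact: nc_ge0.
have Ek k : (k < p)%N -> Normc.normc (E k) <= C0.
  move=> kp; rewrite /C0 (bigD1 (Ordinal kp)) //= lerDl.
  by apply: sumr_ge0 => k' _; exact: nc_ge0.
move=> eps e0.
have [N hN] := pow_small rg0 rr (divr_gt0 e0 (ltr_pwDr ltr01 C0g : 0 < C0 + 1)).
exists (L0 + N * p)%N => m hm.
have -> : \sum_(l < m) c l - lim = E (m - L0)%N by rewrite /E subnKC //; lia.
set m' := (m - L0)%N.
rewrite (divn_eq m' p) EJ nE ltcR Normc.normcM ncX -/r.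
have jN : (N <= m' %/ p)%N by rewrite leq_divRL //; lia.
apply: (le_lt_trans (y := r ^+ N * (C0 + 1))); last by rewrite -ltr_pdivlMr ?ltr_pwDr.
apply: ler_pM => //; first by apply: exprn_ge0.
  exact: nc_ge0.
  by apply: ler_wiXn2l => //; exact: ltW.
by apply: le_trans (Ek _ _) _; [rewrite ltn_mod| rewrite lerDl].
Qed.

End Cplx.

Theorem proposition2p4
  (R : realType) (K : fieldType) (ord : K -> int) (pi : K) (q : nat)
  (hK : is_local_field ord pi q)
  (h2 : (2 : K) != 0) (hres2 : inIdeal ord pi 2)
  (e : nat) (he : ord 2 = e%:Z)
  (n : nat) (a : 'I_n -> K) (haniso : anisotropic a)
  (hord : forall i : 'I_n, 0 <= ord (a i) <= 1)
  (mu : {measure set (kspace ord pi n) -> \bar R}) (hmu : is_haar_on_On mu)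
  (z : R[i]) (hz0 : 0 < `|z|) (hz1 : `|z| < 1)
  (T : nat) :
  let w := z / q%:R in
  let u := z ^+ 2 / q%:R ^+ n in
  let X := Xl mu a in
  series_sumC (fun l => X l (pi ^+ (2 * T)))  z
    (\sum_(l < (2 * T + e + 1)%N) z ^+ l * (X l (pi ^+ (2 * T)))%:C
     + z ^+ (2 * T + e + 1) / (1 - w) * (X (2 * T + e + 1)%N (pi ^+ (2 * T)))%:C)
  /\
  series_sumC (fun l => X l 0) z
    (\sum_(l < e) z ^+ l * (X l 0)%:C
     + z ^+ e / (1 - u) * (X e 0)%:C
     + z ^+ e.+1 / (1 - u) * (X e.+1 0)%:C).
Proof.
move=> w u X.
have qg := q_gt0 hK.
have q0 : (q%:R : R[i]) != 0 by rewrite pnatr_eq0 -lt0n.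
have qR0 : (q%:R : R) != 0 by rewrite pnatr_eq0 -lt0n.
have qn0 : (q%:R ^+ n : R[i]) != 0 by rewrite expf_neq0.
have nq : `|(q%:R : R[i])| = q%:R by exact: normr_nat.
have zw : `|z| / q%:R <= `|z|.
  rewrite ler_pdivrMr ?ltr0n // ler_peMr ?normr_ge0 // ler1n //.
split.
- rewrite /series_sumC.
  set L0 := (2 * T + e + 1)%N.
  pose c l := z ^+ l * (X l (pi ^+ (2 * T)))%:C.
  have -> : \sum_(l < L0) z ^+ l * (X l (pi ^+ (2 * T)))%:C
     + z ^+ L0 / (1 - w) * (X L0 (pi ^+ (2 * T)))%:C
     = \sum_(l < L0) c l + (\sum_(i < 1) c (L0 + i)%N) / (1 - w).
    by rewrite big_ord1 addn0 /c mulrAC.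
  apply: (@Gp R c w L0 1) => //.
    rewrite /w normrM normfV. rewrite nq. exact: le_lt_trans zw hz1.
  move=> l hl; rewrite /c addn1 /X (XA_rec2 hK hmu h2 he haniso hord hl).
  rewrite rmorphM fmorphV rmorph_nat /w exprS; field; exact: q0.
- rewrite /series_sumC.
  pose c l := z ^+ l * (X l 0)%:C.
  have -> : \sum_(l < e) z ^+ l * (X l 0)%:C + z ^+ e / (1 - u) * (X e 0)%:C
       + z ^+ e.+1 / (1 - u) * (X e.+1 0)%:C
     = \sum_(l < e) c l + (\sum_(i < 2) c (e + i)%N) / (1 - u).
    rewrite !big_ord_recr big_ord0 /= add0r addn0 addn1 /c; ring.
  apply: (@Gp R c u e 2) => //.
    rewrite /u normrM normfV !normrX nq.
    have hz1' := hz1; apply: (le_lt_trans _ hz1'); apply: le_trans (_ : `|z| ^+ 2 <= `|z|).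
      rewrite ler_pdivrMr ?exprn_gt0 ?ltr0n // ler_peMr ?exprn_ge0 ?normr_ge0 //.
      by rewrite exprn_ege1 // ler1n.
    rewrite expr2 ler_piMl ?normr_ge0 // le_eqVlt hz1 orbT //.
  move=> l hl; rewrite /c addn2 /X (XB_rec hK hmu h2 he haniso hord hl).
  rewrite rmorphM fmorphV rmorph_nat natrX /u !exprS; field; exact: qn0.
Qed.
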